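(* For $j\in\omega$ let $X_j=\{v_{j,s}: s\in 2^j\}$ (distinct new points indexed by binary strings of length $j$, the sets $X_j$ pairwise disjoint), and for $n\in\omega$ let $H_n$ be the tournament with domain $\bigcup_{j<n}X_j$ (so $|H_n|=2^n-1$) with orientation: for $j>i$, $v_{j,s}\to v_{i,t}$ iff $s(i)=1$ (and otherwise $v_{i,t}\to v_{j,s}$); within a level, $v_{j,s}\to v_{j,t}$ iff $s<_{\mathrm{lex}}t$. Then for every $n\ge1$, $\mathsf{rk}(H_n)=n$.
   Context: A tournament is a structure $(T,\to)$ such that for any two distinct $u,v$ exactly one of $u\to v$, $v\to u$ holds. Let $\mathcal F$ be the class of finite tournaments. Substructures are induced sub-tournaments and $\mathsf{age}(X)$ is the set of finite sub-tournaments of $X$. For $A\le B$, $B$ is a prime extension of $A$ if $|B\setminus A|=1$; a realization of $B$ in $X$ (where $A\le X$) is $C\le X$ with $A\le C$ and an isomorphism $B\to C$ fixing $A$ pointwise. For $F\in\mathsf{age}(X)$ define by recursion: $\mathsf{rk}_X(F)\ge0$ always; $\mathsf{rk}_X(F)\ge\alpha+1$ iff every prime extension $B\in\mathcal F$ of $F$ has a realization $C$ in $X$ with $\mathsf{rk}_X(C)\ge\alpha$; for limit $\alpha$, $\mathsf{rk}_X(F)\ge\alpha$ iff $\mathsf{rk}_X(F)\ge\beta$ for all $\beta<\alpha$. $\mathsf{rk}_X(F)=\sup\{\alpha:\mathsf{rk}_X(F)\ge\alpha\}$ (or $\infty$), and $\mathsf{rk}(X)=\mathsf{rk}_X(\emptyset)$.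 $<_{\mathrm{lex}}$ is the lexicographic order on binary strings of equal length. *)

(* Defs.v *)
From mathcomp Require Import all_boot.
Set Implicit Arguments. Unset Strict Implicit. Unset Printing Implicit Defensive.

Definition is_tournament (T : finType) (r : rel T) : Prop :=
  irreflexive r /\ (forall u v : T, u != v -> r u v = ~~ r v u).

Definition elems (T : finType) (F : {set T}) := {x : T | x \in F}.

(* Rank of a finite sub-tournament F of X = (T, r), for natural-number
   levels: rk_ge r k F  <->  rk_X(F) >= k.
   A prime extension B of F is represented (up to isomorphism over F) as a
   tournament rB on option (elems F), with F embedded via Some and the new
   point None.  A realization of B in X is an injective, edge-preserving map
   g : option (elems F) -> T fixing F pointwise; its image is C. *)
Fixpoint rk_ge (T : finType) (r : rel T) (k : nat) (F : {set T}) : Prop :=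
  match k with
  | 0 => True
  | k'.+1 =>
      forall rB : rel (option (elems F)),
        is_tournament rB ->
        (forall a b : elems F, rB (Some a) (Some b) = r (val a) (val b)) ->
        exists g : option (elems F) -> T,
          [/\ injective g,
              (forall a : elems F, g (Some a) = val a),
              (forall x y, rB x y = r (g x) (g y))
            & rk_ge r k' [set g x | x : option (elems F)]]
  end.

Fixpoint lexlt (s t : seq bool) : bool :=
  match s, t with
  | a :: s', b :: t' => (~~ a && b) || ((a == b) && lexlt s' t')
  | _, _ => false
  end.

Definition Hvert (n : nat) := {j : 'I_n & (nat_of_ord j).-tuple bool}.

Definition Hlev n (u : Hvert n) : nat := tag u.
Definition Hstr n (u : Hvert n) : seq bool := val (tagged u).

Definition Hedge (n : nat) : rel (Hvert n) := fun u w =>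
  let j := Hlev u in let i := Hlev w in
  if i < j then nth false (Hstr u) i
  else if j < i then ~~ nth false (Hstr w) j
  else lexlt (Hstr u) (Hstr w).

(* Main.v *)
Require Import Defs.
From mathcomp Require Import all_boot.
From mathcomp Require Import zify.

Set Implicit Arguments. Unset Strict Implicit. Unset Printing Implicit Defensive.

Section Upper.
Variables (T : finType) (r : rel T).
Hypothesis Ht : is_tournament r.

Definition ext (F : {set T}) (p : T -> bool) : rel (option (elems F)) :=
  fun x y => match x, y with
  | Some a, Some b => r (val a) (val b)
  | None, Some b => p (val b)
  | Some a, None => ~~ p (val a)
  | None, None => false
  end.

Arguments ext F p : clear implicits.

Lemma ext_tour (F : {set T}) (p : T -> bool) : is_tournament (ext F p).
Proof.
case: Ht => Hirr Hanti; split.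
  by case=> [a|] //=; apply: Hirr.
case=> [a|] [b|] //= Hab.
- apply: Hanti; apply: contra Hab => /eqP E.
  by apply/eqP; congr Some; apply: val_inj.
- by rewrite negbK.
Qed.

Definition Rset (F : {set T}) (p : T -> bool) :=
  [set w | (w \notin F) && [forall x in F, r w x == p x]].

Lemma step k (F : {set T}) (p : T -> bool) : rk_ge r k.+1 F ->
  exists w, w \in Rset F p /\ rk_ge r k (w |: F).
Proof.
move=> /= H.
have [g [gi gS ge gk]] := H _ (ext_tour F p) (fun a b => erefl).
exists (g None); split.
  rewrite inE; apply/andP; split.
    apply/negP => Hw.
    have E : g None = g (Some (exist _ (g None) Hw)) by rewrite gS.
    by have := gi _ _ E.
  apply/forallP => x; apply/implyP => Hx.
  have E : x = g (Some (exist _ x Hx)) by rewrite gS.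
  by rewrite {1}E -ge /=.
suff <- : [set g x | x : option (elems F)] = g None |: F by [].
apply/setP => y; rewrite in_setU1.
apply/imsetP/orP.
  case=> [[a|]] _ ->; [right; rewrite gS; exact: valP | by left].
case=> [/eqP->| Hy]; first by exists None.
by exists (Some (exist _ y Hy)); rewrite ?gS.
Qed.

Lemma upper k : forall (F : {set T}) (p : T -> bool), rk_ge r k.+1 F -> 2 ^ k.+1 <= #|Rset F p| + 1.
Proof.
elim: k => [|k IH] F p H.
  have [w [Hw _]] := step p H.
  have : 0 < #|Rset F p| by apply/card_gt0P; exists w.
  rewrite expn1; lia.
have [w [Hw H']] := step p H.
set p1 := fun x => if x == w then true else p x.
set p2 := fun x => if x == w then false else p x.
have H1 := IH _ p1 H'.
have H2 := IH _ p2 H'.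
have Hsub : Rset (w |: F) p1 :|: Rset (w |: F) p2 \subset Rset F p :\ w.
  apply/subsetP => y; rewrite !inE.
  have HwF : w \notin F by move: Hw; rewrite inE => /andP [].
  move=> /orP [] /andP [Hy /forallP Hf];
  (rewrite negb_or in Hy; case/andP: Hy => Hyw HyF;
   rewrite Hyw HyF /=; apply/forallP => x; apply/implyP => Hx;
   have Hxw : x != w; [by apply: contraNneq HwF => <- | ];
   have := Hf x; rewrite in_setU1 Hx orbT /= /p1 /p2 (negbTE Hxw); exact).
have HI : Rset (w |: F) p1 :&: Rset (w |: F) p2 = set0.
  apply/setP => y; rewrite in_set0; apply/negP; rewrite !inE.
  move=> /andP [/andP [_ /forallP H1'] /andP [_ /forallP H2']].
  have := H1' w; have := H2' w; rewrite setU11 /= /p1 /p2 eqxx /=.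
  by move=> /eqP -> /eqP.
have := subset_leq_card Hsub.
rewrite cardsU HI cards0 subn0.
have := cardsD1 w (Rset F p); rewrite Hw /=.
rewrite !expnS in H1 H2 *.
lia.
Qed.

End Upper.

Lemma lexlt_irr s : lexlt s s = false.
Proof. by elim: s => [|a s IH] //=; rewrite IH; case: a. Qed.

Lemma lexlt_anti s t : size s = size t -> s != t -> lexlt s t = ~~ lexlt t s.
Proof.
elim: s t => [|a s IH] [|b t] //= [] Hst Hne.
move: Hne; rewrite eqseq_cons negb_and.
by case: a; case: b => //= Hne; apply: IH.
Qed.

Lemma Hvert_eq n (u w : Hvert n) : Hlev u = Hlev w -> Hstr u = Hstr w -> u = w.
Proof.
case: u => j s; case: w => i t; rewrite /Hlev /Hstr /= => E.
have E' : j = i by apply: val_inj.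
subst i => Es; congr existT; exact: val_inj.
Qed.

Lemma Hedge_tour n : is_tournament (@Hedge n).
Proof.
split.
  by move=> u; rewrite /Hedge ltnn lexlt_irr.
move=> u w Huw; rewrite /Hedge.
case: (ltngtP (Hlev w) (Hlev u)) => H.
- by rewrite negbK.
- done.
- apply: lexlt_anti.
    by rewrite /Hstr !size_tuple.
  apply: contra Huw => /eqP Es; apply/eqP; exact: Hvert_eq.
Qed.

Lemma sum_pow2 n : sumn [seq 2 ^ i | i <- iota 0 n] < 2 ^ n.
Proof.
elim: n => [|n IH] //.
rewrite -[n.+1]addn1 iotaD map_cat sumn_cat /= add0n addn0 expnD expn1.
lia.
Qed.

Lemma card_Hvert n : #|{: Hvert n}| < 2 ^ n.
Proof.
rewrite card_tagged.
have -> : [seq #|{: (nat_of_ord i).-tuple bool}| | i <- enum 'I_n] = [seq 2 ^ i | i <- iota 0 n].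
  rewrite -val_enum_ord -map_comp; apply: eq_map => i /=.
  by rewrite card_tuple card_bool.
exact: sum_pow2.
Qed.

Lemma lower n m : forall k (F : {set Hvert n}), k + m <= n ->
  (forall u, u \in F -> Hlev u < k) ->
  (forall u w, u \in F -> w \in F -> Hlev u = Hlev w -> u = w) ->
  rk_ge (@Hedge n) m F.
Proof.
elim: m => [|m IH] k F Hkm Hlt Huniq //=.
move=> rB [rBirr rBanti] rBF.
have hk : k < n by lia.
set f := fun i => [exists a : elems F, (Hlev (val a) == i) && rB None (Some a)].
have Hs : size (mkseq f k) == k by rewrite size_mkseq.
set s : k.-tuple bool := Tuple Hs.
set v : Hvert n := existT (fun j : 'I_n => (nat_of_ord j).-tuple bool) (Ordinal hk) s.
set g := fun x : option (elems F) => match x with Some a => val a | None => v end.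
have Hv : forall a : elems F, v != val a.
  move=> a; apply/negP => /eqP E.
  by have := Hlt _ (valP a); rewrite -E /v /Hlev /= ltnn.
have Hnone : forall a : elems F, rB None (Some a) = Hedge v (val a).
  move=> a.
  have La := Hlt _ (valP a).
  rewrite /Hedge {2}/Hlev /= La /Hstr /= nth_mkseq // /f.
  apply/idP/existsP.
    by move=> H; exists a; rewrite eqxx H.
  case=> a' /andP [/eqP E H].
  have : val a' = val a by apply: Huniq => //; exact: valP.
  by move/val_inj => <-.
exists g; split.
- case=> [a|] [b|] //= E.
  + by congr Some; apply: val_inj.
  + by move: (Hv a); rewrite -E eqxx.
  + by move: (Hv b); rewrite E eqxx.
- by [].
- case=> [a|] [b|] //=.
  + rewrite rBanti // Hnone; have [_ HA] := Hedge_tour n.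
    by rewrite (HA (val a) v) // eq_sym.
  + by rewrite rBirr; have [HI _] := Hedge_tour n; rewrite HI.
- apply: (IH k.+1); first by lia.
  + move=> u /imsetP [[a|] _ ->] /=.
      by have := Hlt _ (valP a); rewrite /Hlev /= => ?; exact: ltnW.
    by rewrite /v /Hlev /=.
  + move=> u w /imsetP [[a|] _ ->] /imsetP [[b|] _ ->] //= E.
    * by apply: Huniq => //; exact: valP.
    * by have := Hlt _ (valP a); rewrite E /v /Hlev /=; lia.
    * by have := Hlt _ (valP b); rewrite -E /v /Hlev /=; lia.
Qed.

Theorem theorem5p3 (n : nat) (hn : 1 <= n) :
  rk_ge (@Hedge n) n set0 /\ ~ rk_ge (@Hedge n) n.+1 set0.
Proof.
split.
  by apply: (@lower n n 0) => // u; rewrite inE.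
move=> H.
have H1 := upper (Hedge_tour n) (fun _ => true) H.
have H2 : #|Rset (@Hedge n) set0 (fun _ => true)| <= #|{: Hvert n}| := max_card _.
have H3 := card_Hvert n.
rewrite expnS in H1.
have : 0 < 2 ^ n by rewrite expn_gt0.
lia.
Qed.
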